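(* There exists a completely regular space $X$ (for instance the Niemytzki plane) such that $\mathrm{H}_1(X,\mathbb R)\setminus \mathrm{K}_1^w(X,\mathbb R)\neq\emptyset$.
   Context: $\mathrm{H}_1(X,Y)$: mappings $f:X\to Y$ with $f^{-1}(V)$ an $F_\sigma$-set for every open $V\subseteq Y$. $\mathrm{K}_1^w(X,Y)$: mappings $f:X\to Y$ with $f^{-1}(V)$ a countable union of functionally closed subsets of $X$ for every functionally open $V\subseteq Y$ (functionally closed = zero set of a continuous real function; functionally open = complement of such). *)

(* Defs.v *)
From Stdlib Require Import Reals Lra Classical.
Open Scope R_scope.

Record TopSpace := {
  carrier :> Type;
  is_open : (carrier -> Prop) -> Prop;
  open_full : is_open (fun _ => True);
  open_inter : forall U V, is_open U -> is_open V -> is_open (fun x => U x /\ V x);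
  open_union : forall (Fam : (carrier -> Prop) -> Prop),
      (forall U, Fam U -> is_open U) -> is_open (fun x => exists U, Fam U /\ U x)
}.

Definition is_closed (X : TopSpace) (A : X -> Prop) : Prop :=
  is_open X (fun x => ~ A x).

Definition R_open (V : R -> Prop) : Prop :=
  forall x, V x -> exists eps, 0 < eps /\ forall y, Rabs (y - x) < eps -> V y.

Lemma R_open_full : R_open (fun _ => True).
Proof. intros x _; exists 1; split; [lra | auto]. Qed.

Lemma R_open_inter : forall U V, R_open U -> R_open V -> R_open (fun x => U x /\ V x).
Proof.
  intros U V HU HV x [Ux Vx].
  destruct (HU x Ux) as [e1 [He1 H1]]; destruct (HV x Vx) as [e2 [He2 H2]].
  exists (Rmin e1 e2); split; [apply Rmin_pos; auto|].
  intros y Hy; split; [apply H1 | apply H2];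
    eapply Rlt_le_trans; eauto; [apply Rmin_l | apply Rmin_r].
Qed.

Lemma R_open_union : forall (Fam : (R -> Prop) -> Prop),
    (forall U, Fam U -> R_open U) -> R_open (fun x => exists U, Fam U /\ U x).
Proof.
  intros Fam HF x [U [FU Ux]].
  destruct (HF U FU x Ux) as [e [He H]].
  exists e; split; auto. intros y Hy; exists U; split; auto.
Qed.

Definition R_top : TopSpace :=
  {| carrier := R; is_open := R_open; open_full := R_open_full;
     open_inter := R_open_inter; open_union := R_open_union |}.

Definition continuous (X Y : TopSpace) (f : X -> Y) : Prop :=
  forall V : Y -> Prop, is_open Y V -> is_open X (fun x => V (f x)).

Definition completely_regular (X : TopSpace) : Prop :=
  forall (F : X -> Prop) (x : X), is_closed X F -> ~ F x ->
    exists g : X -> R_top, continuous X R_top g /\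
      (forall y, 0 <= g y <= 1) /\ g x = 0 /\ (forall y, F y -> g y = 1).

Definition F_sigma (X : TopSpace) (A : X -> Prop) : Prop :=
  exists Fs : nat -> X -> Prop, (forall n, is_closed X (Fs n)) /\
    forall x, A x <-> exists n, Fs n x.

Definition functionally_closed (X : TopSpace) (A : X -> Prop) : Prop :=
  exists g : X -> R_top, continuous X R_top g /\ forall x, A x <-> g x = 0.

Definition functionally_open (X : TopSpace) (A : X -> Prop) : Prop :=
  functionally_closed X (fun x => ~ A x).

Definition H1 (X Y : TopSpace) (f : X -> Y) : Prop :=
  forall V : Y -> Prop, is_open Y V -> F_sigma X (fun x => V (f x)).

Definition K1w (X Y : TopSpace) (f : X -> Y) : Prop :=
  forall V : Y -> Prop, functionally_open Y V ->
    exists Fs : nat -> X -> Prop, (forall n, functionally_closed X (Fs n)) /\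
      forall x, V (f x) <-> exists n, Fs n x.

(* Main.v *)
Require Import Defs.
From Stdlib Require Import Reals.
From Stdlib Require Import Lra Lia Classical ClassicalEpsilon FunctionalExtensionality Arith.Cantor.
Open Scope R_scope.

(* Psi-like space: countable tree nodes (inl) + branches (inr t). *)
Fixpoint br (n : nat) (t : nat -> bool) : nat :=
  match n with
  | O => O
  | S m => (2 * br m t + (if t m then 2 else 1))%nat
  end.

Lemma br_ge : forall n t, (n <= br n t)%nat.
Proof. induction n; intros t; simpl; [lia|]. specialize (IHn t). destruct (t n); lia. Qed.

Lemma br_eq : forall m n t u, br m t = br n u ->
  m = n /\ forall j, (j < m)%nat -> t j = u j.
Proof.
  induction m; intros n t u H.
  - destruct n; [split; [auto|intros; lia]|].
    simpl in H. destruct (u n); lia.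
  - destruct n.
    + simpl in H. destruct (t m); lia.
    + simpl in H.
      assert (Hx : br m t = br n u /\ t m = u n).
      { destruct (t m), (u n); split; auto; lia. }
      destruct Hx as [Hx Ht]. destruct (IHm n t u Hx) as [-> Hj].
      split; auto. intros j Hj'. destruct (Nat.eq_dec j n); [subst; auto|]. apply Hj; lia.
Qed.

Definition Xo (U : nat + (nat -> bool) -> Prop) : Prop :=
  forall t, U (inr t) -> exists N, forall n, (N <= n)%nat -> U (inl (br n t)).

Lemma Xo_full : Xo (fun _ => True).
Proof. intros t _; exists O; auto. Qed.

Lemma Xo_inter : forall U V, Xo U -> Xo V -> Xo (fun x => U x /\ V x).
Proof.
  intros U V HU HV t [Ut Vt]. destruct (HU t Ut) as [N1 H1]; destruct (HV t Vt) as [N2 H2].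
  exists (max N1 N2); intros n Hn; split; [apply H1|apply H2]; lia.
Qed.

Lemma Xo_union : forall (Fam : (nat + (nat -> bool) -> Prop) -> Prop),
    (forall U, Fam U -> Xo U) -> Xo (fun x => exists U, Fam U /\ U x).
Proof.
  intros Fam HF t [U [FU Ut]]. destruct (HF U FU t Ut) as [N H].
  exists N; intros n Hn; exists U; auto.
Qed.

Definition Xs : TopSpace :=
  {| carrier := nat + (nat -> bool); is_open := Xo; open_full := Xo_full;
     open_inter := Xo_inter; open_union := Xo_union |}.

Lemma cont_crit : forall g : Xs -> R_top,
  (forall t, exists N, forall n, (N <= n)%nat -> g (inl (br n t)) = g (inr t)) ->
  continuous Xs R_top g.
Proof.
  intros g H V _ t Vt. destruct (H t) as [N HN]. exists N; intros n Hn.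
  simpl. rewrite (HN n Hn). exact Vt.
Qed.

Lemma all_Fsigma : forall A : Xs -> Prop, F_sigma Xs A.
Proof.
  intros A.
  exists (fun n x => match n with
                     | O => match x with inl _ => False | inr t => A (inr t) end
                     | S m => x = inl m /\ A x end).
  split.
  - intros [|m]; unfold is_closed; simpl; intros t _.
    + exists O; intros n _; auto.
    + exists (S m); intros n Hn [Heq _]. injection Heq; intros.
      pose proof (br_ge n t). lia.
  - intros [d|t]; split.
    + intros Ad; exists (S d); auto.
    + intros [[|m] Hm]; [contradiction|]. destruct Hm as [-> ?]; auto.
    + intros At; exists O; auto.
    + intros [[|m] Hm]; auto. destruct Hm as [Heq _]; discriminate.
Qed.

Lemma cr : completely_regular Xs.
Proof.
  intros F x HF Fx.
  destruct x as [d|t].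
  - exists (fun y : Xs => match y with inl e => if Nat.eq_dec e d then 0 else 1 | inr _ => 1 end).
    split; [|split; [|split]].
    + apply cont_crit. intros t. exists (S d). intros n Hn.
      pose proof (br_ge n t). destruct (Nat.eq_dec (br n t) d); [lia|auto].
    + intros [e|u]; [destruct (Nat.eq_dec e d)|]; lra.
    + simpl. destruct (Nat.eq_dec d d); congruence.
    + intros [e|u] Fy; auto. destruct (Nat.eq_dec e d); subst; [contradiction|auto].
  - destruct (HF t Fx) as [N HN].
    set (S0 := fun y : Xs => y = inr t \/ exists n, (N <= n)%nat /\ y = inl (br n t)).
    exists (fun y : Xs => if excluded_middle_informative (S0 y) then 0 else 1).
    split; [|split; [|split]].
    + apply cont_crit. intros u.
      destruct (classic (u = t)) as [->|Hne].
      * exists N. intros n Hn.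
        destruct (excluded_middle_informative (S0 (inl (br n t)))) as [|C].
        2:{ exfalso; apply C; right; exists n; auto. }
        destruct (excluded_middle_informative (S0 (inr t))) as [|C]; auto.
        exfalso; apply C; left; auto.
      * assert (Hk : exists k, t k <> u k).
        { apply NNPP; intro C; apply Hne; apply functional_extensionality.
          intro k; destruct (Bool.bool_dec (u k) (t k)); auto.
          exfalso; apply C; exists k; auto. }
        destruct Hk as [k Hk]. exists (S k). intros n Hn.
        destruct (excluded_middle_informative (S0 (inr u))) as [[Hu|[m [_ Hm]]]|_].
        { injection Hu; intros; contradiction. }
        { discriminate. }
        destruct (excluded_middle_informative (S0 (inl (br n u)))) as [[Hu|[m [_ Hm]]]|_]; auto.
        { discriminate. }
        injection Hm; intro Hb. destruct (br_eq _ _ _ _ Hb) as [-> Hj].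
        exfalso; apply Hk; symmetry; apply Hj; lia.
    + intros y; destruct (excluded_middle_informative (S0 y)); lra.
    + destruct (excluded_middle_informative (S0 (inr t))) as [|C]; auto.
      exfalso; apply C; left; auto.
    + intros y Fy. destruct (excluded_middle_informative (S0 y)) as [[->|[n [Hn ->]]]|]; auto.
      * contradiction.
      * exfalso; exact (HN n Hn Fy).
Qed.

Lemma zero_char : forall g : Xs -> R_top, continuous Xs R_top g -> forall t,
  g (inr t) = 0 <-> forall k, exists N, forall n, (N <= n)%nat ->
     Rabs (g (inl (br n t))) < / INR (S k).
Proof.
  intros g Hg t; split.
  - intros H0 k.
    assert (Hpos : 0 < / INR (S k)) by (apply Rinv_0_lt_compat; apply lt_0_INR; lia).
    assert (Ho : R_open (fun y => Rabs y < / INR (S k))).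
    { intros y Hy. exists (/ INR (S k) - Rabs y); split; [lra|].
      intros z Hz. pose proof (Rabs_triang_inv z y). lra. }
    assert (Ht : Rabs (g (inr t)) < / INR (S k)) by (rewrite H0, Rabs_R0; auto).
    destruct (Hg _ Ho t Ht) as [N HN].
    exists N; exact HN.
  - intros H. apply NNPP; intro Ha. set (a := g (inr t)) in *.
    assert (Hpa : 0 < Rabs a) by (apply Rabs_pos_lt; auto).
    assert (Ho : R_open (fun y => Rabs (y - a) < Rabs a / 2)).
    { intros y Hy. exists (Rabs a / 2 - Rabs (y - a)); split; [lra|].
      intros z Hz. pose proof (Rabs_triang (z - y) (y - a)).
      replace (z - y + (y - a)) with (z - a) in H0 by ring. lra. }
    assert (Ht : Rabs (g (inr t) - a) < Rabs a / 2) by (rewrite Rminus_diag, Rabs_R0; lra).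
    destruct (Hg _ Ho t Ht) as [N1 HN1].
    destruct (archimed_cor1 (Rabs a / 2)) as [K [HK HK0]]; [lra|].
    destruct K as [|k]; [lia|].
    destruct (H k) as [N2 HN2].
    specialize (HN1 (max N1 N2) (Nat.le_max_l _ _)). specialize (HN2 (max N1 N2) (Nat.le_max_r _ _)).
    simpl in HN1. set (v := g (inl (br (max N1 N2) t))) in *.
    pose proof (Rabs_triang_inv a v). rewrite <- Rabs_Ropp in HN1.
    replace (- (v - a)) with (a - v) in HN1 by ring. lra.
Qed.

Definition dec (t : nat -> bool) (m k i : nat) : Prop :=
  t (to_nat (m, to_nat (k, i))) = true.

Definition Zc (c : nat -> nat -> nat -> Prop) (t : nat -> bool) : Prop :=
  exists m, forall k, exists N, forall n, (N <= n)%nat -> c m k (br n t).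

Definition Adiag (t : nat -> bool) : Prop := ~ Zc (dec t) t.

Lemma dec_surj : forall c : nat -> nat -> nat -> Prop, exists t,
  forall m k i, dec t m k i <-> c m k i.
Proof.
  intros c.
  exists (fun j => let (m, r) := of_nat j in let (k, i) := of_nat r in
          if excluded_middle_informative (c m k i) then true else false).
  intros m k i; unfold dec. rewrite !cancel_of_to.
  destruct (excluded_middle_informative (c m k i)); split; auto; discriminate.
Qed.

Theorem mainTheorem4 :
  exists X : TopSpace, completely_regular X /\
    exists f : X -> R_top, H1 X R_top f /\ ~ K1w X R_top f.
Proof.
  exists Xs; split; [exact cr|].
  exists (fun x : Xs => match x with
                        | inl _ => 1
                        | inr t => if excluded_middle_informative (Adiag t) then 0 else 1 end).
  split.
  - intros V _. apply all_Fsigma.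
  - intros HK.
    destruct (HK (fun y => y <> 1)) as [Fs [HF HFs]].
    { exists (fun y => y - 1); split.
      - intros V HV x Vx. destruct (HV (x - 1) Vx) as [e [He H]].
        exists e; split; auto. intros y Hy; apply H.
        replace (y - 1 - (x - 1)) with (y - x) by ring; auto.
      - intros x; simpl; split; intro H; [apply NNPP in H; rewrite H; ring|lra]. }
    set (G := fun m => proj1_sig (constructive_indefinite_description _ (HF m))).
    assert (HG : forall m, continuous Xs R_top (G m) /\ forall x, Fs m x <-> G m x = 0).
    { intro m; exact (proj2_sig (constructive_indefinite_description _ (HF m))). }
    set (c := fun m k i => Rabs (G m (inl i)) < / INR (S k)).
    destruct (dec_surj c) as [t0 Ht0].
    assert (E1 : Zc (dec t0) t0 <-> Zc c t0).
    { unfold Zc; split; intros [m Hm]; exists m; intro k; destruct (Hm k) as [N HN];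
      exists N; intros n Hn; apply Ht0; auto. }
    assert (E2 : Zc c t0 <-> exists m, Fs m (inr t0)).
    { unfold Zc, c; split; intros [m Hm]; exists m.
      - apply (proj2 (HG m)). apply (zero_char _ (proj1 (HG m))). exact Hm.
      - apply (zero_char _ (proj1 (HG m))). apply (proj2 (HG m)). exact Hm. }
    assert (E3 : Adiag t0 <-> exists m, Fs m (inr t0)).
    { rewrite <- (HFs (inr t0)). simpl.
      destruct (excluded_middle_informative (Adiag t0)) as [HA|HA].
      - split; intros _; [lra|exact HA].
      - split; intro H; [contradiction|]. exfalso; apply H; reflexivity. }
    unfold Adiag in E3. tauto.
Qed.
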